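(* Let $\tilde{\mathcal Z}\subseteq[0,1]^d$ and let $\mathcal Z_1,\dots,\mathcal Z_{3^d}$ be mutually disjoint subregions of $\tilde{\mathcal Z}$. Let $\Delta=\lfloor3^d/2\rfloor$. Apply an admissible algorithm with budget $n$ to any given CSO problem. If $\mathbb{P}(\tau(\tilde{\mathcal Z})\le n-\Delta)>0$, then there exists $\kappa_1$ such that $\mathbb{P}\bigl(\tau(\mathcal Z_{\kappa_1})\ge\tau(\tilde{\mathcal Z})+\Delta\bigm|\tau(\tilde{\mathcal Z})\le n-\Delta\bigr)\ge\frac12$. If $\mathbb{P}(\tau(\tilde{\mathcal Z})\le n-\Delta)<1$, then there exists $\kappa_2$ such that $\mathbb{P}\bigl(\tau(\mathcal Z_{\kappa_2})>n\bigm|\tau(\tilde{\mathcal Z})>n-\Delta\bigr)\ge\frac12$.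
   Context: A CSO problem: objective $y:[0,1]^d\to\mathbb{R}$; a query at $\mathbf{x}$ returns $Y(\mathbf{x})=y(\mathbf{x})+\varepsilon(\mathbf{x})$ with noise independent of everything else. Admissible algorithm with budget $n$: (i) $\mathbf{x}_1$ deterministic or a measurable function of a random vector $U_1$; (ii) for $t=1,\dots,n-1$, $\mathbf{x}_{t+1}$ a measurable function of $\mathbf{x}_1,Y(\mathbf{x}_1),\dots,\mathbf{x}_t,Y(\mathbf{x}_t)$ and a random vector $U_{t+1}$; (iii) output $\hat{\mathbf{x}}_n^*$ a measurable function of the full history and a random vector $U_n^*$; (iv) $\hat{\mathbf{x}}_n^*\in\{\mathbf{x}_1,\dots,\mathbf{x}_n\}$; the $U$'s are independent random vectors independent of the noise. First hitting time: $\tau(\mathcal Z)=\min\{t\in\{1,\dots,n\}:\mathbf{x}_t\in\mathcal Z\}$ if some $\mathbf{x}_t\in\mathcal Z$, and $\tau(\mathcal Z)=n+1$ otherwise. *)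

(* Defs.v *)
From HB Require Import structures.
From mathcomp Require Import all_boot all_order all_algebra.
From mathcomp Require Import all_classical all_reals all_analysis.
Set Implicit Arguments. Unset Strict Implicit. Unset Printing Implicit Defensive.
Import Order.TTheory GRing.Theory Num.Theory.
Local Open Scope classical_set_scope.
Local Open Scope ring_scope.

Definition rpoint (R : realType) (d : nat) := d.-tuple R.

Definition unit_cube (R : realType) (d : nat) : set (rpoint R d) :=
  [set x | forall i : 'I_d, 0 <= tnth x i <= 1].

Section Run.
Variables (R : realType) (d : nat) (T : Type) (m : nat -> nat).
Variables (y : rpoint R d -> R) (eps : rpoint R d -> T -> R).
(* U t is the random vector U_{t+1} used to choose the (t+1)-th query *)
Variable U : forall t : nat, T -> (m t).-tuple R.
(* next t (h, u) = x_{t+1}, computed from the history h = ((x_1,Y(x_1)),...,(x_t,Y(x_t)))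
   and the random vector u = U_{t+1}; for t = 0 the history is empty. *)
Variable next : forall t : nat, (t.-tuple (rpoint R d * R) * (m t).-tuple R)%type -> rpoint R d.

Fixpoint history (t : nat) (w : T) : t.-tuple (rpoint R d * R) :=
  match t with
  | 0 => [tuple]
  | t'.+1 =>
      let h := history t' w in
      let p := next (h, U t' w) in
      [tuple of rcons h (p, y p + eps p w)]
  end.

(* x_t for t >= 1 *)
Definition query (t : nat) (w : T) : rpoint R d := next (history t.-1 w, U t.-1 w).

(* first hitting time tau(Z) = min{t in 1..n : x_t \in Z}, and n+1 if no such t *)
Definition hitting_time (n : nat) (Z : set (rpoint R d)) (w : T) : nat :=
  \big[minn/n.+1]_(1 <= t < n.+1 | query t w \in Z) t.
End Run.

Definition sigma_rv (T : Type) dV (V : measurableType dV) (X : T -> V) : set (set T) :=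
  preimage_set_system setT X measurable.

Definition mutual_indep (R : realType) dT (T : measurableType dT) (P : probability T R)
    (I : finType) (F : I -> set (set T)) : Prop :=
  forall A : I -> set T, (forall i, F i (A i)) ->
    P (\bigcap_i A i) = (\prod_(i : I) P (A i))%E.

(* Admissible algorithm with budget n on the CSO problem (y, eps):
   the U's (U_1..U_n, U_n^* ) and the noise field are mutually independent. *)
Definition admissible (R : realType) (d n : nat) dT (T : measurableType dT)
    (P : probability T R) (m : nat -> nat) (mstar : nat)
    (y : rpoint R d -> R) (eps : rpoint R d -> T -> R)
    (U : forall t : nat, T -> (m t).-tuple R) (Ustar : T -> mstar.-tuple R)
    (next : forall t : nat, (t.-tuple (rpoint R d * R) * (m t).-tuple R)%type -> rpoint R d)
    (out : (n.-tuple (rpoint R d * R) * mstar.-tuple R)%type -> rpoint R d) : Prop :=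
  (forall t, measurable_fun setT (U t)) /\
  measurable_fun setT Ustar /\
  measurable_fun setT y /\
  measurable_fun setT (fun q : (rpoint R d * T)%type => eps q.1 q.2) /\
  (forall t, measurable_fun setT (@next t)) /\
  (forall t z, @unit_cube R d (@next t z)) /\
  measurable_fun setT out /\
  (forall z, out z \in [seq p.1 | p <- z.1]) /\
  mutual_indep P (fun i : 'I_n.+2 =>
        if (i < n)%N then sigma_rv (U i)
        else if (i == n :> nat) then sigma_rv Ustar
        else <<s \bigcup_(x in [set: rpoint R d]) sigma_rv (eps x) >>).

Definition cond_prob (R : realType) dT (T : measurableType dT) (P : probability T R)
    (A B : set T) : R :=
  fine (P (A `&` B)) / fine (P B).

(* Main.v *)
Require Import Defs.
From HB Require Import structures.
From mathcomp Require Import all_boot all_order all_algebra.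
From mathcomp Require Import all_classical all_reals all_analysis.
From mathcomp Require Import lra zify.
Import Order.TTheory GRing.Theory Num.Theory.
Local Open Scope classical_set_scope.
Local Open Scope ring_scope.
Set Bullet Behavior "None".
Section Meas.
Variables (R : realType) (d : nat) (dT : measure_display) (T : measurableType dT).
Variables (m : nat -> nat) (y : rpoint R d -> R) (eps : rpoint R d -> T -> R).
Variable U : forall t : nat, T -> (m t).-tuple R.
Variable next : forall t : nat, (t.-tuple (rpoint R d * R) * (m t).-tuple R)%type -> rpoint R d.
Hypothesis mU : forall t, measurable_fun setT (U t).
Hypothesis my : measurable_fun setT y.
Hypothesis meps : measurable_fun setT (fun q : (rpoint R d * T)%type => eps q.1 q.2).
Hypothesis mnext : forall t, measurable_fun setT (@next t).

Lemma mhist t : measurable_fun setT (history y eps U next t).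
Proof.
elim: t => [|t IH].
  exact: (@measurable_cst _ _ T _ setT [tuple]).
set p := fun w => next t (history y eps U next t w, U t w).
have mp : measurable_fun setT p.
  exact: (measurableT_comp (mnext t) (measurable_fun_pair IH (mU t))).
have mv : measurable_fun setT (fun w => (p w, y (p w) + eps (p w) w)).
  apply: measurable_fun_pair => //.
  apply: measurable_realfun.measurable_funD; first exact: measurableT_comp my mp.
  exact: (measurableT_comp meps (measurable_fun_pair mp (@measurable_id _ T setT))).
apply/measurable_fun_tnthP => i.
have [lt|ge] := ltnP i t.
  rewrite (_ : _ \o _ = fun w => tnth (history y eps U next t w) (Ordinal lt)).
    exact: (measurableT_comp (measurable_tnth _) IH).
  apply/funext => w /=; rewrite (tnth_nth (p w, y (p w) + eps (p w) w)) /=.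
  by rewrite nth_rcons size_tuple lt (tnth_nth (p w, y (p w) + eps (p w) w)).
rewrite (_ : _ \o _ = fun w => (p w, y (p w) + eps (p w) w)) //.
apply/funext => w /=; rewrite (tnth_nth (p w, y (p w) + eps (p w) w)) /=.
have -> : (i : nat) = t by apply/eqP; rewrite eqn_leq ge -ltnS ltn_ord.
by rewrite nth_rcons size_tuple ltnn eqxx.
Qed.

Lemma mquery t : measurable_fun setT (query y eps U next t).
Proof. exact: (measurableT_comp (mnext _) (measurable_fun_pair (mhist _) (mU _))). Qed.
End Meas.
Section NatMeas.
Variables (dT : measure_display) (T : measurableType dT).
Definition nm (f : T -> nat) := forall K : set nat, measurable (f @^-1` K).

Lemma nm_cst N : nm (fun _ => N).
Proof.
move=> K; have [KN|nKN] := pselect (K N).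
  by rewrite (_ : _ @^-1` _ = setT) //; apply/seteqP; split => w //=.
by rewrite (_ : _ @^-1` _ = set0) //; apply/seteqP; split => w //=.
Qed.

Lemma nm_big (Q : nat -> T -> bool) (N : nat) (r : seq nat) :
  (forall t, measurable [set w | Q t w]) ->
  nm (fun w => \big[minn/N]_(t <- r | Q t w) t).
Proof.
move=> mQ; elim: r => [|x r IH].
  by under eq_fun do rewrite big_nil; exact: nm_cst.
move=> K; under eq_fun do rewrite big_cons.
set g := fun w => \big[minn/N]_(t <- r | Q t w) t.
rewrite (_ : _ @^-1` _ = ([set w | Q x w] `&` g @^-1` (minn x @^-1` K)) `|`
                         (~` [set w | Q x w] `&` g @^-1` K)).
  apply: measurableU; apply: measurableI.
  - exact: mQ.
  - exact: IH.
  - exact: measurableC.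
  - exact: IH.
apply/seteqP; split => w /=; case: (Q x w) => /=.
- by move=> h; left.
- by move=> h; right.
- by case=> -[].
- by case=> -[].
Qed.

Lemma nm_rel (f g : T -> nat) (Q : nat -> nat -> bool) :
  nm f -> nm g -> measurable [set w | Q (f w) (g w)].
Proof.
move=> mf mg.
rewrite (_ : [set w | _] = \bigcup_a (f @^-1` [set a] `&` g @^-1` [set b | Q a b])).
  by apply: bigcupT_measurable => a; apply: measurableI.
apply/seteqP; split => w /=.
  by move=> h; exists (f w) => //.
by case=> a _ [/= <-].
Qed.
End NatMeas.
Lemma bigmin_ub (N : nat) (b : nat -> bool) (r : seq nat) :
  (\big[minn/N]_(t <- r | b t) t <= N)%N.
Proof.
elim: r => [|x r IH]; first by rewrite big_nil.
rewrite big_cons; case: (b x) => //; exact: leq_trans (geq_minr _ _) IH.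
Qed.

Lemma bigmin_le (N : nat) (b : nat -> bool) (r : seq nat) t :
  t \in r -> b t -> (\big[minn/N]_(i <- r | b i) i <= t)%N.
Proof.
elim: r => [|x r IH] //; rewrite inE big_cons => /orP [/eqP ->|tr] bt.
  by rewrite bt geq_minl.
case: (b x); last exact: IH.
exact: leq_trans (geq_minr _ _) (IH tr bt).
Qed.

Lemma bigmin_mem (N : nat) (b : nat -> bool) (r : seq nat) :
  let v := \big[minn/N]_(i <- r | b i) i in v = N \/ (v \in r /\ b v).
Proof.
elim: r => [|x r IH] /=; first by rewrite big_nil; left.
rewrite big_cons; case bx: (b x); last first.
  by case: IH => [->|[h1 h2]]; [left | right; rewrite inE h1 orbT].
rewrite /minn; case: ifP => _.
  by right; rewrite inE eqxx.
by case: IH => [->|[h1 h2]]; [left | right; rewrite inE h1 orbT].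
Qed.

Definition Hn (n : nat) (b : nat -> bool) : nat := (\big[minn/n.+1]_(1 <= t < n.+1 | b t) t)%N.

Lemma Hn_ub n (b : nat -> bool) : (Hn n b <= n.+1)%N.
Proof. exact: bigmin_ub. Qed.

Lemma Hn_le n (b : nat -> bool) t : (1 <= t <= n)%N -> b t -> (Hn n b <= t)%N.
Proof. by move=> ht bt; apply: bigmin_le => //; rewrite mem_index_iota ltnS. Qed.

Lemma Hn_mem n (b : nat -> bool) : (Hn n b <= n)%N -> (1 <= Hn n b)%N /\ b (Hn n b).
Proof.
move=> hn; case: (bigmin_mem n.+1 b (index_iota 1 n.+1)) => [h|[h1 h2]].
  by move: hn; rewrite /Hn h ltnn.
by split => //; move: h1; rewrite mem_index_iota => /andP[].
Qed.

Lemma Hn_mono n (b c : nat -> bool) : (forall t, b t -> c t) -> (Hn n c <= Hn n b)%N.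
Proof.
move=> bc; have [hb|hb] := leqP (Hn n b) n.
  have [h1 h2] := @Hn_mem n b hb; apply: Hn_le; [by rewrite h1 hb | exact: bc].
by apply: leq_trans (Hn_ub _ _) hb.
Qed.

Lemma card_bad (N : nat) (b : 'I_N -> nat -> bool) n lo hi :
  (forall k l t, b k t -> b l t -> k = l) ->
  (#|[pred k | (lo <= Hn n (b k) < hi) && (Hn n (b k) <= n)]| <= hi - lo)%N.
Proof.
move=> disj; set S := [pred k | _].
rewrite cardE -(size_map (fun k => Hn n (b k))).
rewrite -[(hi - lo)%N](size_iota lo).
apply: uniq_leq_size.
  rewrite map_inj_in_uniq ?enum_uniq // => k l.
  rewrite !mem_enum !inE => /andP[_ hk] /andP[_ hl] e.
  have [_ bk] := @Hn_mem n (b k) hk; have [_ bl] := @Hn_mem n (b l) hl.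
  by apply: (disj _ _ (Hn n (b k))) => //; rewrite e.
move=> v /mapP [k]; rewrite mem_enum inE => /andP[/andP[h1 h2] _] ->.
rewrite mem_iota h1 /=; case: (leqP lo hi) => [lh|lh]; first by rewrite subnKC.
by move: (leq_ltn_trans h1 h2); rewrite ltnNge ltnW.
Qed.
Lemma arith (R : realType) (S p Nr cr : R) :
  cr * p <= S -> S < p / 2 * Nr -> Nr <= 2 * cr -> 0 < p -> False.
Proof. move=> *; nra. Qed.

Lemma avg (R : realType) (dT : measure_display) (T : measurableType dT)
  (P : probability T R) (N c : nat) (Eb : 'I_N -> T -> bool) (A : set T) :
  measurable A -> (forall k, measurable [set w | Eb k w]) ->
  (forall w, A w -> c <= #|[pred k | Eb k w]|)%N ->
  (0 < N)%N -> (N <= c.*2)%N -> (0 < P A)%E ->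
  exists k, 1 / 2 <= cond_prob P [set w | Eb k w] A.
Proof.
move=> mA mE hc N0 Nc PA0.
have key : ((c%:R)%:E * P A <= \sum_(k < N) P ([set w | Eb k w] `&` A))%E.
  rewrite -integral_cst //.
  under eq_bigr do rewrite -integral_indic //.
  rewrite -(@ge0_integral_sum _ _ _ P A mA 'I_N (fun k x => (\1_[set w | Eb k w] x)%:E)); last first.
  - by move=> k x _; rewrite lee_fin indicE.
  - by move=> k; apply/measurable_realfun.measurable_EFinP; exact: measurable_realfun.measurable_indic.
  apply: ge0_le_integral => //.
  - by move=> x _; rewrite /cst lee_fin.
  - apply: emeasurable_sum => k; apply/measurable_realfun.measurable_EFinP.
    exact: measurable_realfun.measurable_indic.
  move=> x Ax; rewrite /cst sumEFin lee_fin.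
  have hE : forall i, (x \in [set w | Eb i w]) = Eb i x.
    by move=> i; apply/idP/idP; rewrite in_setE.
  under eq_bigr do rewrite indicE hE.
  rewrite (eq_bigr (fun i => if Eb i x then 1 else 0)); last by move=> i _; case: (Eb i x).
  rewrite -big_mkcond /= sumr_const ler_nat.
  apply: leq_trans (hc x Ax) _.
  by [].
have finE : forall S, measurable S -> P S = (fine (P S))%:E.
  move=> S mS; rewrite fineK // ge0_fin_numE ?measure_ge0 //.
  exact: le_lt_trans (probability_le1 P mS) (ltry 1).
move: key; rewrite (finE A mA).
rewrite (eq_bigr (fun k => (fine (P ([set w | Eb k w] `&` A)))%:E)); last first.
  by move=> k _; rewrite -finE //; exact: measurableI.
rewrite sumEFin -EFinM lee_fin => key.
have p0 : 0 < fine (P A) by move: PA0; rewrite (finE A mA) lte_fin.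
case: (pselect (exists k, 1 / 2 <= cond_prob P [set w | Eb k w] A)) => // hn.
exfalso.
have lt : forall k : 'I_N, fine (P ([set w | Eb k w] `&` A)) < fine (P A) / 2.
  move=> k; rewrite ltNge; apply/negP => h; apply: hn; exists k.
  rewrite /cond_prob ler_pdivlMr // mul1r.
  lra.
have : \sum_(k < N) fine (P ([set w | Eb k w] `&` A)) < \sum_(k < N) fine (P A) / 2.
  apply: ltr_sum => //; apply/hasP; exists (Ordinal N0) => //; exact: mem_index_enum.
rewrite sumr_const card_ord => lt2.
have e : fine (P A) / 2 *+ N = fine (P A) / 2 * N%:R by rewrite mulr_natr.
rewrite e in lt2.
have hN : (N%:R : R) <= 2 * c%:R by rewrite -natrM ler_nat mul2n.
exact: (@arith _ _ _ _ _ key lt2 hN p0).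
Qed.

Lemma aux_count (a b N D : nat) : (a + b = N -> b <= D -> N - D <= a)%N.
Proof. lia. Qed.

Theorem corollary1 (R : realType) (d n : nat) (dT : measure_display)
  (T : measurableType dT) (P : probability T R) (m : nat -> nat) (mstar : nat)
  (y : rpoint R d -> R) (eps : rpoint R d -> T -> R)
  (U : forall t : nat, T -> (m t).-tuple R) (Ustar : T -> mstar.-tuple R)
  (next : forall t : nat, (t.-tuple (rpoint R d * R) * (m t).-tuple R)%type -> rpoint R d)
  (out : (n.-tuple (rpoint R d * R) * mstar.-tuple R)%type -> rpoint R d)
  (Zt : set (rpoint R d)) (Z : 'I_(3 ^ d) -> set (rpoint R d)) :
  admissible P y eps U Ustar next out ->
  measurable Zt -> Zt `<=` @unit_cube R d ->
  (forall k, measurable (Z k)) -> (forall k, Z k `<=` Zt) ->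
  (forall k l, k != l -> Z k `&` Z l = set0) ->
  let Delta := (3 ^ d)./2 in
  let tau := hitting_time y eps U next n in
  let A := [set w | (tau Zt w <= n - Delta)%N] in
  (((0 < P A)%E ->
     exists k1 : 'I_(3 ^ d),
       1 / 2 <= cond_prob P [set w | (tau Zt w + Delta <= tau (Z k1) w)%N] A) /\
   ((P A < 1)%E ->
     exists k2 : 'I_(3 ^ d),
       1 / 2 <= cond_prob P [set w | (n < tau (Z k2) w)%N]
                              [set w | (n - Delta < tau Zt w)%N])).
Proof.
move=> [mU [_ [my [meps [mnext [_ [_ [_ _]]]]]]]] mZt _ mZ sub disj Delta tau A.
have mq : forall (Z' : set (rpoint R d)) t, measurable Z' ->
    measurable [set w | query y eps U next t w \in Z'].
  move=> Z' t mZ'.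
  rewrite (_ : [set w | _] = query y eps U next t @^-1` Z'); last first.
    by apply/seteqP; split => w /=; rewrite in_setE.
  have := @mquery R d dT T m y eps U next mU my meps mnext t measurableT Z' mZ'; by rewrite setTI.
have ntau : forall Z', measurable Z' -> @nm dT T (tau Z').
  move=> Z' mZ'.
  exact: (@nm_big dT T (fun t w => query y eps U next t w \in Z') n.+1 (index_iota 1 n.+1)
                 (fun t => mq Z' t mZ')).
have mA : measurable A := ntau Zt mZt [set a | (a <= n - Delta)%N].
have tau_sub : forall k w, (tau Zt w <= tau (Z k) w)%N.
  move=> k w; apply: (@Hn_mono n (fun t => query y eps U next t w \in Z k)
                                  (fun t => query y eps U next t w \in Zt)).
  by move=> t; rewrite !in_setE; apply: sub.
have dj : forall w k l t, query y eps U next t w \in Z k ->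
                          query y eps U next t w \in Z l -> k = l.
  move=> w k l t; rewrite !in_setE => hk hl.
  case: (eqVneq k l) => // ne.
  have e := disj k l ne.
  have : (Z k `&` Z l) (query y eps U next t w) by split.
  by rewrite e.
have hb : forall w lo hi, (#|[pred k | (lo <= tau (Z k) w < hi) && (tau (Z k) w <= n)]| <= hi - lo)%N.
  move=> w lo hi.
  exact: (@card_bad (3 ^ d) (fun k t => query y eps U next t w \in Z k) n lo hi (dj w)).
have N0 : (0 < 3 ^ d)%N by rewrite expn_gt0.
have Nc : (3 ^ d <= (3 ^ d - Delta).*2)%N.
  have := odd_double_half (3 ^ d); rewrite /Delta; lia.
split.
  move=> PA0.
  apply: (@avg R dT T P (3 ^ d) (3 ^ d - Delta)
            (fun k w => (tau Zt w + Delta <= tau (Z k) w)%N) A mA) => //.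
  - move=> k; exact: (@nm_rel dT T _ _ (fun a b => (a + Delta <= b)%N) (ntau Zt mZt) (ntau (Z k) (mZ k))).
  move=> w Aw.
  set G := [pred k | _].
  have := cardC G; rewrite card_ord => eC.
  have hB : (#|[predC G]| <= Delta)%N.
    have := hb w (tau Zt w) (tau Zt w + Delta); rewrite addKn => hb'.
    apply: leq_trans hb'.
    apply: subset_leq_card; apply/fintype.subsetP => k; rewrite !inE /= -ltnNge => h.
    have ht : (tau Zt w <= n)%N by apply: leq_trans Aw (leq_subr _ _).
    have [h1 _] := @Hn_mem n (fun t => query y eps U next t w \in Zt) ht.
    have := tau_sub k w; move: Aw h1 h; rewrite /A /=.
    rewrite /tau /hitting_time -/(Hn n _) => *.
    lia.
  exact: (@aux_count _ _ _ _ eC hB).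
move=> PA1.
have eB : [set w | (n - Delta < tau Zt w)%N] = ~` A.
  by apply/seteqP; split => w /=; rewrite ltnNge => /negP.
rewrite eB.
apply: (@avg R dT T P (3 ^ d) (3 ^ d - Delta)
          (fun k w => (n < tau (Z k) w)%N) (~` A) (measurableC mA)) => //.
- move=> k; exact: (ntau (Z k) (mZ k) [set a | (n < a)%N]).
- move=> w Aw.
  set G := [pred k | _].
  have := cardC G; rewrite card_ord => eC.
  have hB : (#|[predC G]| <= Delta)%N.
    have := hb w (n - Delta).+1 n.+1; rewrite subSS => hb'.
    apply: leq_trans (leq_trans hb' _); last by lia.
    apply: subset_leq_card; apply/fintype.subsetP => k; rewrite !inE /= -leqNgt => h.
    have := tau_sub k w; move: Aw h; rewrite /A /=.
    move/negP; rewrite -ltnNge => *.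
    lia.
  exact: (@aux_count _ _ _ _ eC hB).
- by rewrite probability_setC // sube_gt0.
Qed.
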